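(* Let $(K,\delta)$ be a differential field of characteristic zero and $x\in K$ with $\delta(x)=1$, and let $C_K=\{c\in K:\delta(c)=0\}$ be its constant field. Then the set $\mathrm{Stab}(\delta,K)$ of stable elements is a $C_K[x]$-submodule of $K$ (under multiplication in $K$), and $\delta(\mathrm{Stab}(\delta,K))\subseteq\mathrm{Stab}(\delta,K)$.
   Context: A differential field $(K,\delta)$ is a field with an additive map $\delta$ satisfying $\delta(fg)=f\delta(g)+g\delta(f)$. $\mathrm{Stab}(\delta,K)$ is the set of $a\in K$ for which there is a sequence $(a_i)_{i\ge0}$ in $K$ with $a_0=a$ and $\delta(a_{i+1})=a_i$ for all $i\in\mathbb{N}$. *)

(* Defs.v *)
From mathcomp Require Import all_boot all_order all_algebra.
Set Implicit Arguments. Unset Strict Implicit. Unset Printing Implicit Defensive.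
Import GRing.Theory.
Local Open Scope ring_scope.

Definition is_derivation (K : fieldType) (delta : K -> K) : Prop :=
  (forall f g : K, delta (f + g) = delta f + delta g) /\
  (forall f g : K, delta (f * g) = f * delta g + g * delta f).

Definition constants (K : fieldType) (delta : K -> K) : K -> Prop :=
  fun c => delta c = 0.

Definition Stab (K : fieldType) (delta : K -> K) : K -> Prop :=
  fun a => exists s : nat -> K, s 0%N = a /\ forall i : nat, delta (s i.+1) = s i.

Definition in_CKx (K : fieldType) (delta : K -> K) (x : K) : K -> Prop :=
  fun r => exists p : {poly K}, (forall i : nat, constants delta p`_i) /\ r = p.[x].

(* Main.v *)
Require Import Defs.
From mathcomp Require Import all_boot all_order all_algebra.
From mathcomp Require Import ring.
Import GRing.Theory.
Local Open Scope ring_scope.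

Theorem theorem2p11 (K : fieldType) (delta : K -> K) (x : K) :
  is_derivation delta ->
  [pchar K] =i pred0 ->
  delta x = 1 ->
  (* Stab(delta, K) is a C_K[x]-submodule of K *)
  (Stab delta 0 /\
   (forall a b : K, Stab delta a -> Stab delta b -> Stab delta (a + b)) /\
   (forall r a : K, in_CKx delta x r -> Stab delta a -> Stab delta (r * a))) /\
  (* delta(Stab) is contained in Stab *)
  (forall a : K, Stab delta a -> Stab delta (delta a)).
Proof.
move=> [hadd hmul] _ hx.
have d0 : delta 0 = 0.
  have := hadd 0 0; rewrite addr0 => /(congr1 (fun y => y - delta 0)).
  by rewrite subrr addrK.
have dN : forall y, delta (- y) = - delta y.
  move=> y; have := hadd y (- y); rewrite subrr d0 => /esym/eqP.
  by rewrite addrC addr_eq0 => /eqP.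
have dMn : forall y n, delta (y *+ n) = delta y *+ n.
  by move=> y; elim=> [|n IH]; rewrite ?mulr0n ?d0 // !mulrS hadd IH.
have S0 : Stab delta 0 by exists (fun _ => 0); split => // i; rewrite d0.
have SD : forall a b : K, Stab delta a -> Stab delta b -> Stab delta (a + b).
  move=> a b [s [s0 hs]] [t [t0 ht]]; exists (fun i => s i + t i).
  by split; [rewrite s0 t0 | move=> i; rewrite hadd hs ht].
have SC : forall c a, delta c = 0 -> Stab delta a -> Stab delta (c * a).
  move=> c a hc [s [s0 hs]]; exists (fun i => c * s i).
  by split; [rewrite s0 | move=> i; rewrite hmul hc mulr0 addr0 hs].
have SX : forall a, Stab delta a -> Stab delta (x * a).
  move=> a [s [s0 hs]]; exists (fun i => x * s i - s i.+1 *+ i).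
  split; first by rewrite s0 mulr0n subr0.
  move=> i; rewrite hadd dN dMn hmul hx mulr1 !hs mulrSr.
  ring.
split; last first.
  move=> a [s [s0 hs]]; exists (fun i => if i is j.+1 then s j else delta a).
  by split => // -[|i] /=; rewrite ?s0 ?hs.
split=> //; split=> //.
move=> r a [p [hp ->]] Sa; elim/poly_ind: p hp => [|p c IH] hp.
  by rewrite horner0 mul0r.
rewrite hornerMXaddC mulrDl; apply: SD.
  rewrite mulrAC mulrC; apply: SX; apply: IH => i.
  have := hp i.+1; by rewrite /constants coefD coefMX coefC /= addr0.
apply: SC => //; have := hp 0%N.
by rewrite /constants coefD coefMX coefC /= add0r.
Qed.
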